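(* Let $n>24$, $\beta>\frac{\log 3}{\log n}$, $\lambda>\frac12$, and $m=n^{1/2+\beta+\lambda}$ (assumed to be an integer). Then $$\mathsf P\left\{\left|\sum_{i=1}^n \frac{k_i(x)(k_i(x)-1)}{m(m-1)}\cdot\frac{1}{\|p\|^2}-1\right|\le \frac{22}{5}\,n^{-\beta/2}\right\}\ \ge\ 1-\frac{10}{9}e^{-n^{\lambda-1/2}}.$$
   Context: Standing setup: $U$ is a finite set (the key space) with a probability measure $q$; $T=\{1,\dots,n\}$; $h:U\to T$ is an arbitrary function. $p_i=\sum_{u\in h^{-1}(i)}q(u)$ and $\|p\|^2=\sum_{i=1}^n p_i^2$. $U^m$ carries the product measure $q^m$, and $\mathsf P$ denotes probability under $q^m$ of the event for $x=(x_1,\dots,x_m)\in U^m$. $k_i(x)=|\{j: h(x_j)=i\}|$. *)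

(* Defs.v *)
From mathcomp Require Import all_boot all_order all_algebra.
From mathcomp Require Import all_classical all_reals all_analysis.
Set Implicit Arguments. Unset Strict Implicit. Unset Printing Implicit Defensive.
Import Order.TTheory GRing.Theory Num.Theory.
Local Open Scope ring_scope.

Definition is_prob (R : realType) (U : finType) (q : U -> R) : Prop :=
  (forall u, 0 <= q u) /\ \sum_(u : U) q u = 1.

Definition pmass (R : realType) (U : finType) (n : nat) (q : U -> R)
  (h : U -> 'I_n) (i : 'I_n) : R :=
  \sum_(u : U | h u == i) q u.

Definition pnorm2 (R : realType) (U : finType) (n : nat) (q : U -> R)
  (h : U -> 'I_n) : R :=
  \sum_(i < n) pmass q h i ^+ 2.

Definition kcount (U : finType) (n m : nat) (h : U -> 'I_n)
  (x : {ffun 'I_m -> U}) (i : 'I_n) : nat :=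
  #|[set j : 'I_m | h (x j) == i]|.

Definition probm (R : realType) (U : finType) (m : nat) (q : U -> R)
  (E : {ffun 'I_m -> U} -> bool) : R :=
  \sum_(x : {ffun 'I_m -> U} | E x) \prod_(j < m) q (x j).

(* Main.v *)
Require Import Defs.
From mathcomp Require Import all_boot all_order all_algebra all_fingroup.
From mathcomp Require Import all_classical all_reals all_analysis.
From mathcomp Require Import ring lra zify.
Import Order.TTheory GRing.Theory Num.Theory.
Local Open Scope ring_scope.

Set Implicit Arguments. Unset Strict Implicit. Unset Printing Implicit Defensive.

Definition Ex (R : numDomainType) (U : finType) (m : nat) (q : U -> R)
  (f : {ffun 'I_m -> U} -> R) : R :=
  \sum_(x : {ffun 'I_m -> U}) (\prod_(j < m) q (x j)) * f x.

Definition pcomp (U : finType) (m : nat) (s : {perm 'I_m}) (x : {ffun 'I_m -> U}) :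
  {ffun 'I_m -> U} := [ffun i => x (s i)].

Lemma Ex_perm (R : numDomainType) (U : finType) (m : nat) (q : U -> R)
  (f : {ffun 'I_m -> U} -> R) (s : {perm 'I_m}) :
  Ex q (fun x => f (pcomp s x)) = Ex q f.
Proof.
rewrite /Ex.
have inj : injective (@pcomp U m (s^-1)%g).
  move=> x y E; apply/ffunP => i /=.
  have := congr1 (fun z : {ffun 'I_m -> U} => z (s i)) E; rewrite /pcomp /= !ffunE; by rewrite permK.
rewrite (reindex_inj inj); apply: eq_bigr => x _.
have -> : pcomp s (pcomp (s^-1)%g x) = x.
  by apply/ffunP => i /=; rewrite /pcomp !ffunE permK.
congr (_ * _).
rewrite (reindex_inj (@perm_inj _ s)); apply: eq_bigr => i _.
by rewrite /pcomp !ffunE permK.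
Qed.

Lemma regroup_nat (R : comPzSemiRingType) (F : nat -> R) (k m : nat) :
  (k + k <= m)%N ->
  \prod_(0 <= i < m) F i =
  (\prod_(0 <= j < k) (F j * F (j + k))) * \prod_(k + k <= i < m) F i.
Proof.
move=> hk.
rewrite (big_cat_nat (n := k + k)) //=; congr (_ * _).
rewrite (big_cat_nat (n := k)) ?leq_addr //= big_split /=; congr (_ * _).
have -> : (k + k = 0 + k + k)%N by rewrite add0n.
by rewrite -{1}(add0n k) big_addn addnK.
Qed.

Lemma regroup_ord (R : comPzSemiRingType) (m' k : nat) (G : 'I_m'.+1 -> R) :
  (k + k <= m'.+1)%N ->
  \prod_(i < m'.+1) G i =
  (\prod_(j < k) (G (inord j) * G (inord (j + k)))) *
  \prod_(k + k <= i < m'.+1) G (inord i).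
Proof.
move=> hk.
rewrite (eq_bigr (fun i : 'I_m'.+1 => G (inord i))); last by move=> i _; rewrite inord_val.
rewrite -(big_mkord xpredT (fun i => G (inord i))) (regroup_nat _ hk).
by rewrite big_mkord.
Qed.

Lemma factor (R : numDomainType) (U T : finType) (m' k' : nat) (q : U -> R)
  (A B : T -> U -> R) :
  (k'.+1 + k'.+1 <= m'.+1)%N -> \sum_u q u = 1 ->
  Ex q (fun x : {ffun 'I_m'.+1 -> U} =>
     \prod_(j < k'.+1) \sum_(o : T) A o (x (inord j)) * B o (x (inord (j + k'.+1)))) =
  (\sum_o (\sum_u q u * A o u) * (\sum_u q u * B o u)) ^+ k'.+1.
Proof.
move=> hk hq; set k := k'.+1.
rewrite /Ex.
under eq_bigr => x _ do rewrite bigA_distr_bigA mulr_sumr.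
rewrite exchange_big /=.
transitivity (\sum_(f : {ffun 'I_k -> T})
   \prod_(j < k) ((\sum_u q u * A (f j) u) * (\sum_u q u * B (f j) u))); last first.
  by rewrite -(bigA_distr_bigA (fun (j : 'I_k) (o : T) =>
    (\sum_u q u * A o u) * (\sum_u q u * B o u))) /= prodr_const card_ord.
apply: eq_bigr => f _.
pose H := fun (i : nat) (u : U) => q u * (if (i < k)%N then A (f (inord i)) u
   else if (i < k + k)%N then B (f (inord (i - k))) u else 1).
have HL : forall (j : 'I_k) u, H (inord (n' := m') j) u = q u * A (f j) u.
  move=> j u; rewrite /H inordK; last by apply: leq_trans hk; apply: ltn_addr.
  by rewrite ltn_ord inord_val.
have HR : forall (j : 'I_k) u, H (inord (n' := m') (j + k)) u = q u * B (f j) u.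
  move=> j u; rewrite /H inordK; last by apply: leq_trans hk; rewrite ltn_add2r.
  by rewrite ltnNge leq_addl /= ltn_add2r ltn_ord addnK inord_val.
have Hrest : forall i u, (k + k <= i)%N -> H i u = q u.
  move=> i u hi; rewrite /H.
  have -> : (i < k)%N = false by apply/negbTE; rewrite -leqNgt; apply: leq_trans hi; apply: leq_addl.
  by rewrite ltnNge hi /= mulr1.
transitivity (\sum_(x : {ffun 'I_m'.+1 -> U}) \prod_(i < m'.+1) H i (x i)).
  apply: eq_bigr => x _.
  rewrite (regroup_ord (fun i => q (x i)) hk) (regroup_ord (fun i => H i (x i)) hk).
  rewrite [in RHS](eq_big_nat _ _ (F2 := fun i => q (x (inord i)))); last first.
    by move=> i /andP [hi hi2]; rewrite inordK // Hrest.
  rewrite [in RHS](eq_bigr (fun j : 'I_k => (q (x (inord j)) * q (x (inord (j+k)))) *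
     (A (f j) (x (inord j)) * B (f j) (x (inord (j + k)))))); last first.
    by move=> j _; rewrite HL HR mulrACA.
  by rewrite [in RHS]big_split /= mulrAC.
rewrite -(bigA_distr_bigA (fun (i : 'I_m'.+1) u => H i u)) /=.
rewrite (regroup_ord (fun i => \sum_u H i u) hk).
rewrite (eq_big_nat _ _ (F2 := fun i => 1)); last first.
  move=> i /andP [hi hi2]; rewrite inordK //.
  by under eq_bigr => u _ do rewrite Hrest //.
rewrite prodr_const_nat expr1n mulr1.
apply: eq_bigr => j _.
by congr (_ * _); apply: eq_bigr => u _; rewrite ?HL ?HR.
Qed.

Definition Ssum (R : numDomainType) (U : finType) (m : nat) (K : U -> U -> R)
  (x : {ffun 'I_m -> U}) : R :=
  \sum_(a < m) \sum_(b < m | b != a) K (x a) (x b).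

Definition Csum (R : numDomainType) (U : finType) (m : nat) (K : U -> U -> R)
  (x : {ffun 'I_m -> U}) (i0 i1 : 'I_m) : R :=
  \sum_(s : {perm 'I_m}) K (x (s i0)) (x (s i1)).

Lemma Csum_const (R : numDomainType) (U : finType) (m : nat) (K : U -> U -> R)
  (x : {ffun 'I_m -> U}) (i0 i1 j0 j1 : 'I_m) :
  i0 != i1 -> j0 != j1 -> Csum K x i0 i1 = Csum K x j0 j1.
Proof.
move=> hi hj.
pose t1 := tperm j0 i0.
pose j2 := t1 j1.
pose t2 := tperm j2 i1.
pose t := (t1 * t2)%g.
have hj2 : j2 != i0.
  by rewrite /j2 -(tpermL j0 i0) (inj_eq (@perm_inj _ t1)) eq_sym.
have ht0 : t j0 = i0 by rewrite /t permM /t1 tpermL /t2 tpermD // eq_sym.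
have ht1 : t j1 = i1 by rewrite /t permM -/j2 /t2 tpermL.
rewrite /Csum -ht0 -ht1 [RHS](reindex_inj (mulgI t)).
by apply: eq_bigr => s _; rewrite !permM.
Qed.

Lemma sum_Csum (R : numDomainType) (U : finType) (m : nat) (K : U -> U -> R)
  (x : {ffun 'I_m -> U}) :
  \sum_(i0 < m) \sum_(i1 < m | i1 != i0) Csum K x i0 i1 =
  (#|{perm 'I_m}|)%:R * Ssum K x.
Proof.
rewrite /Csum.
under eq_bigr => i0 _ do rewrite exchange_big /=.
rewrite exchange_big /= mulr_natl -sumr_const.
apply: eq_bigr => s _.
rewrite /Ssum [RHS](reindex_inj (@perm_inj _ s)); apply: eq_bigr => a _.
rewrite [RHS](reindex_inj (@perm_inj _ s)) /=; apply: eq_big => b //.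
by rewrite (inj_eq (@perm_inj _ s)).
Qed.

Lemma sum_neq_const (R : numDomainType) (m : nat) (a : 'I_m) (c : R) :
  \sum_(b < m | b != a) c = c * (m%:R - 1).
Proof.
rewrite sumr_const.
have -> : #|(fun i : 'I_m => i != a)| = m.-1.
  rewrite -[in RHS](card_ord m) -(cardC1 a); by apply: eq_card => i; rewrite !inE.
have hm : (0 < m)%N by apply: leq_ltn_trans (ltn_ord a).
rewrite -[LHS]mulr_natr; congr (_ * _).
by rewrite -{2}(prednK hm) -addn1 natrD addrK.
Qed.

Lemma Csum_val (R : numDomainType) (U : finType) (m : nat) (K : U -> U -> R)
  (x : {ffun 'I_m -> U}) (i0 i1 : 'I_m) :
  i0 != i1 ->
  Csum K x i0 i1 * (m%:R * (m%:R - 1)) = (#|{perm 'I_m}|)%:R * Ssum K x.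
Proof.
move=> hi; rewrite -sum_Csum.
rewrite (eq_bigr (fun a : 'I_m => Csum K x i0 i1 * (m%:R - 1))); last first.
  move=> a _; rewrite -(sum_neq_const a); apply: eq_bigr => b hb.
  by apply: Csum_const; rewrite // eq_sym.
by rewrite sumr_const card_ord -[RHS]mulr_natr -mulrA [X in _ * X]mulrC.
Qed.

Definition Wsum (R : numDomainType) (U : finType) (m' k' : nat) (K : U -> U -> R)
  (x : {ffun 'I_m'.+1 -> U}) : R :=
  \sum_(j < k'.+1) K (x (inord j)) (x (inord (j + k'.+1))).

Lemma sum_Wsum (R : numDomainType) (U : finType) (m' k' : nat) (K : U -> U -> R)
  (x : {ffun 'I_m'.+1 -> U}) :
  (k'.+1 + k'.+1 <= m'.+1)%N ->
  (\sum_(s : {perm 'I_m'.+1}) Wsum k' K (pcomp s x)) * (m'.+1%:R * (m'.+1%:R - 1)) =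
  k'.+1%:R * ((#|{perm 'I_m'.+1}|)%:R * Ssum K x).
Proof.
move=> hk.
rewrite /Wsum exchange_big /= mulr_suml.
rewrite (eq_bigr (fun _ => (#|{perm 'I_m'.+1}|)%:R * Ssum K x)); last first.
  move=> j _; rewrite -(@Csum_val _ _ _ K x (inord j) (inord (j + k'.+1))).
    by congr (_ * _); apply: eq_bigr => s _; rewrite /pcomp !ffunE.
  have h1 : (j < m'.+1)%N by apply: leq_trans hk; apply: ltn_addr.
  have h2 : (j + k'.+1 < m'.+1)%N by apply: leq_trans hk; rewrite ltn_add2r.
  apply/eqP => /(congr1 val); rewrite /= !inordK // => /eqP.
  by rewrite -{1}(addn0 j) eqn_add2l.
by rewrite sumr_const card_ord [RHS]mulr_natl.
Qed.

Lemma Ex_one (R : numDomainType) (U : finType) (m : nat) (q : U -> R) :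
  \sum_u q u = 1 -> \sum_(x : {ffun 'I_m -> U}) \prod_(j < m) q (x j) = 1.
Proof.
move=> hq; rewrite -(bigA_distr_bigA (fun (j : 'I_m) u => q u)) /=.
by rewrite hq prodr_const expr1n.
Qed.

Lemma sum_pick (R : numDomainType) (I : finType) (c : I) (F : I -> R) :
  \sum_(i : I) ((c == i)%:R * F i) = F c.
Proof.
rewrite (bigD1 c) //= eqxx mul1r big1 ?addr0 //.
by move=> i hi; rewrite eq_sym (negbTE hi) mul0r.
Qed.

Lemma collision (R : numDomainType) (U : finType) (n m : nat) (h : U -> 'I_n)
  (x : {ffun 'I_m -> U}) :
  \sum_(i < n) ((#|[set j : 'I_m | h (x j) == i]|)%:R *
       ((#|[set j : 'I_m | h (x j) == i]|)%:R - 1) : R) =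
  Ssum (fun u v => ((h u == h v)%:R : R)) x.
Proof.
have kc : forall i, ((#|[set j : 'I_m | h (x j) == i]|)%:R : R) =
   \sum_a ((h (x a) == i)%:R : R).
  move=> i; rewrite -sum1_card natr_sum [LHS]big_mkcond; apply: eq_bigr => a _.
  by rewrite inE; case: eqP.
transitivity (\sum_(i < n) \sum_a ((h (x a) == i)%:R *
      ((#|[set j : 'I_m | h (x j) == i]|)%:R - 1) : R)).
  by apply: eq_bigr => i _; rewrite {1}kc mulr_suml.
rewrite exchange_big /=; apply: eq_bigr => a _.
rewrite (sum_pick (h (x a)) (fun i => (#|[set j : 'I_m | h (x j) == i]|)%:R - 1)).
rewrite kc (bigD1 a) //= eqxx addrAC subrr add0r; apply: eq_bigr => b _.
by rewrite eq_sym.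
Qed.

Lemma jensen_exp (R : realType) (I : finType) (y : I -> R) :
  (0 < #|I|)%N ->
  expR ((\sum_i y i) / (#|I|)%:R) <= (\sum_i expR (y i)) / (#|I|)%:R.
Proof.
move=> hI; set N : R := (#|I|)%:R; set c := (\sum_i y i) / N.
have hN : 0 < N by rewrite ltr0n.
have key : forall i, expR c * (1 + (y i - c)) <= expR (y i).
  move=> i; have -> : expR (y i) = expR c * expR (y i - c).
    by rewrite -expRD addrCA subrr addr0.
  by rewrite ler_wpM2l ?expR_ge0 // expR_ge1Dx.
rewrite ler_pdivlMr //.
apply: le_trans (ler_sum _ (fun i _ => key i)).
rewrite -mulr_sumr big_split /= sumrB sumr_const sumr_const.
have -> : (\sum_i y i) = c * N by rewrite /c divfK // gt_eqF.
rewrite /N [X in c *+ X](_ : _ = #|I|); last by apply: eq_card.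
by rewrite -[c *+ _]mulr_natr subrr addr0.
Qed.

Definition Kh (R : realType) (U : finType) (n : nat) (h : U -> 'I_n) : U -> U -> R :=
  fun u v => (h u == h v)%:R.

Definition Aop (R : realType) (U : finType) (n : nat) (th : R) (h : U -> 'I_n)
  (o : 'I_n.+1) (u : U) : R :=
  if val o == 0%N then 1 else (expR th - 1) * ((val (h u)).+1 == val o)%:R.

Definition Bop (R : realType) (U : finType) (n : nat) (h : U -> 'I_n)
  (o : 'I_n.+1) (u : U) : R :=
  if val o == 0%N then 1 else ((val (h u)).+1 == val o)%:R.

Lemma expK (R : realType) (U : finType) (n : nat) (th : R) (h : U -> 'I_n) u v :
  expR (th * Kh R h u v) = \sum_(o < n.+1) Aop th h o u * Bop R h o v.
Proof.
rewrite big_ord_recl /Aop /Bop /= mulr1.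
rewrite (eq_bigr (fun i : 'I_n => (h u == i)%:R * ((expR th - 1) * (h v == i)%:R))); last first.
  move=> i _; rewrite /bump leq0n add1n !eqSS.
  by rewrite mulrAC mulrC.
rewrite (sum_pick (h u) (fun i => (expR th - 1) * (h v == i)%:R)).
rewrite /Kh eq_sym; case: (h v == h u) => /=.
  by rewrite mulr1 mulr1 addrC subrK.
by rewrite mulr0 expR0 mulr0 addr0.
Qed.

Lemma pmassE (R : realType) (U : finType) (n : nat) (q : U -> R) (h : U -> 'I_n) b :
  \sum_u q u * ((val (h u)).+1 == (val b).+1)%:R = pmass q h b.
Proof.
rewrite /pmass [RHS]big_mkcond; apply: eq_bigr => u _; rewrite eqSS.
by rewrite val_eqE; case: (h u == b); rewrite ?mulr1 ?mulr0.
Qed.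

Lemma mgf_W (R : realType) (U : finType) (n m' k' : nat) (q : U -> R)
  (h : U -> 'I_n) (th : R) :
  (k'.+1 + k'.+1 <= m'.+1)%N -> \sum_u q u = 1 ->
  Ex q (fun x : {ffun 'I_m'.+1 -> U} => expR (th * Wsum k' (Kh R h) x)) =
  (1 + (expR th - 1) * pnorm2 q h) ^+ k'.+1.
Proof.
move=> hk hq.
have -> : (fun x : {ffun 'I_m'.+1 -> U} => expR (th * Wsum k' (Kh R h) x)) =
   (fun x => \prod_(j < k'.+1) \sum_(o < n.+1)
       Aop th h o (x (inord j)) * Bop R h o (x (inord (j + k'.+1)))).
  apply: funext => x; rewrite /Wsum mulr_sumr expR_sum.
  by apply: eq_bigr => j _; rewrite expK.
rewrite factor //; congr (_ ^+ _).
rewrite big_ord_recl /Aop /Bop /=.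
under eq_bigr => u _ do rewrite mulr1.
rewrite hq mulr1; congr (_ + _).
rewrite /pnorm2 mulr_sumr; apply: eq_bigr => b _.
rewrite /bump leq0n add1n.
under eq_bigr => u _ do rewrite mulrCA.
by rewrite -mulr_sumr !pmassE expr2 mulrA.
Qed.

Lemma Ex_mono (R : realType) (U : finType) (m : nat) (q : U -> R)
  (f g : {ffun 'I_m -> U} -> R) :
  (forall u, 0 <= q u) -> (forall x, f x <= g x) -> Ex q f <= Ex q g.
Proof.
move=> hq hfg; rewrite /Ex; apply: ler_sum => x _.
by rewrite ler_wpM2l // prodr_ge0.
Qed.

Lemma Ex_avg (R : realType) (U : finType) (m : nat) (q : U -> R) (I : finType)
  (g : I -> {ffun 'I_m -> U} -> R) (N : R) :
  Ex q (fun x => (\sum_i g i x) / N) = (\sum_i Ex q (g i)) / N.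
Proof.
rewrite /Ex exchange_big /= mulr_suml; apply: eq_bigr => x _.
by rewrite -mulr_sumr mulrA.
Qed.

Definition Ustat (R : realType) (U : finType) (n m : nat) (h : U -> 'I_n)
  (x : {ffun 'I_m -> U}) : R :=
  Ssum (Kh R h) x / (m%:R * (m%:R - 1)).

Lemma mgf_U (R : realType) (U : finType) (n m' k' : nat) (q : U -> R)
  (h : U -> 'I_n) (th : R) :
  (k'.+1 + k'.+1 <= m'.+1)%N -> \sum_u q u = 1 -> (forall u, 0 <= q u) ->
  Ex q (fun x : {ffun 'I_m'.+1 -> U} => expR (th * k'.+1%:R * Ustat R h x)) <=
  (1 + (expR th - 1) * pnorm2 q h) ^+ k'.+1.
Proof.
move=> hk hq hq0.
set N : R := (#|{perm 'I_m'.+1}|)%:R.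
have hNn : (0 < #|{perm 'I_m'.+1}|)%N by apply/card_gt0P; exists 1%g.
have hN : 0 < N by rewrite ltr0n.
have hm2 : (1 < m'.+1)%N by apply: leq_trans hk; rewrite addSn ltnS addnS.
have hmm : (m'.+1%:R * (m'.+1%:R - 1) : R) != 0.
  apply: mulf_neq0; first by rewrite pnatr_eq0.
  by rewrite subr_eq0 pnatr_eq1 eq_sym neq_ltn hm2.
have E : forall x : {ffun 'I_m'.+1 -> U}, th * k'.+1%:R * Ustat R h x =
    (\sum_(s : {perm 'I_m'.+1}) th * Wsum k' (Kh R h) (pcomp s x)) / N.
  move=> x; rewrite -mulr_sumr -mulrA -mulrA; congr (_ * _).
  apply: (mulIf hmm).
  rewrite [RHS]mulrAC (sum_Wsum _ _ hk) /Ustat -[LHS]mulrA divfK //.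
  by rewrite [N * _]mulrC mulrA mulrK // unitfE gt_eqF.
pose g := fun x : {ffun 'I_m'.+1 -> U} => (\sum_(s : {perm 'I_m'.+1})
     expR (th * Wsum k' (Kh R h) (pcomp s x))) / N.
have st1 : Ex q (fun x : {ffun 'I_m'.+1 -> U} => expR (th * k'.+1%:R * Ustat R h x))
    <= Ex q g.
  apply: Ex_mono => // x; rewrite E.
  exact: (jensen_exp (fun s : {perm 'I_m'.+1} => th * Wsum k' (Kh R h) (pcomp s x)) hNn).
apply: (le_trans st1); rewrite /g Ex_avg.
rewrite (eq_bigr (fun _ => (1 + (expR th - 1) * pnorm2 q h) ^+ k'.+1)); last first.
  move=> s _; rewrite -(@mgf_W R U n m' k' q h th hk hq).
  exact: (Ex_perm q (fun y => expR (th * Wsum k' (Kh R h) y)) s).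
by rewrite sumr_const -/N -mulr_natr mulrK // unitfE gt_eqF.
Qed.

Lemma markov (R : realType) (U : finType) (m : nat) (q : U -> R)
  (E : {ffun 'I_m -> U} -> bool) (Y : {ffun 'I_m -> U} -> R) :
  (forall u, 0 <= q u) -> (forall x, 0 <= Y x) -> (forall x, E x -> 1 <= Y x) ->
  probm q E <= Ex q Y.
Proof.
move=> hq hY hE; rewrite /probm /Ex big_mkcond /=; apply: ler_sum => x _.
have hP : 0 <= \prod_(j < m) q (x j) by apply: prodr_ge0.
case hx: (E x).
  by rewrite -{1}(mulr1 (\prod_(j < m) q (x j))) ler_wpM2l // hE.
by rewrite mulr_ge0.
Qed.

Lemma probm_compl (R : realType) (U : finType) (m : nat) (q : U -> R)
  (E : {ffun 'I_m -> U} -> bool) :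
  \sum_u q u = 1 -> probm q E = 1 - probm q (fun x => ~~ E x).
Proof.
move=> hq; rewrite /probm; have := Ex_one m hq; rewrite (bigID E) /= => H.
by rewrite -[X in X - _]H addrK.
Qed.

Lemma Ex_scale (R : realType) (U : finType) (m : nat) (q : U -> R)
  (f : {ffun 'I_m -> U} -> R) (c : R) :
  Ex q (fun x => c * f x) = c * Ex q f.
Proof.
by rewrite /Ex mulr_sumr; apply: eq_bigr => x _; rewrite mulrCA.
Qed.

Lemma Ex_add (R : realType) (U : finType) (m : nat) (q : U -> R)
  (f g : {ffun 'I_m -> U} -> R) :
  Ex q (fun x => f x + g x) = Ex q f + Ex q g.
Proof.
by rewrite /Ex -big_split; apply: eq_bigr => x _; rewrite mulrDr.
Qed.

Lemma sum_pmass (R : realType) (U : finType) (n : nat) (q : U -> R) (h : U -> 'I_n) :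
  \sum_(i < n) pmass q h i = \sum_u q u.
Proof.
by rewrite /pmass (partition_big h xpredT).
Qed.

Lemma pnorm2_bounds (R : realType) (U : finType) (n : nat) (q : U -> R)
  (h : U -> 'I_n) :
  is_prob q -> (0 < n)%N -> (n%:R)^-1 <= pnorm2 q h <= 1.
Proof.
move=> [hq0 hq1] hn.
have hp0 : forall i, 0 <= pmass q h i by move=> i; apply: sumr_ge0 => u _.
have hs : \sum_(i < n) pmass q h i = 1 by rewrite sum_pmass.
have hp1 : forall i, pmass q h i <= 1.
  move=> i; rewrite -hs (bigD1 i) //= lerDl; apply: sumr_ge0 => j _; exact: hp0.
apply/andP; split.
  have hN : (0 : R) < n%:R by rewrite ltr0n.
  set t := (n%:R : R)^-1.
  have ht : t * n%:R = 1 by rewrite /t mulVf // gt_eqF.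
  have key : forall i, 2 * t * pmass q h i - t ^+ 2 <= pmass q h i ^+ 2.
    by move=> i; have := sqr_ge0 (pmass q h i - t); nra.
  have : \sum_(i < n) (2 * t * pmass q h i - t ^+ 2) <= \sum_(i < n) pmass q h i ^+ 2.
    by apply: ler_sum => i _; exact: key.
  rewrite sumrB -mulr_sumr hs sumr_const card_ord.
  rewrite -mulr_natr /pnorm2.
  have : t ^+ 2 * n%:R = t by rewrite expr2 -mulrA ht mulr1.
  lra.
rewrite /pnorm2 -hs; apply: ler_sum => i _.
by rewrite expr2 ler_piMr.
Qed.

Lemma expN_le (R : realType) (y : R) : 0 <= y -> expR (- y) <= (1 + y)^-1.
Proof.
move=> hy; rewrite expRN lef_pV2 ?posrE ?expR_gt0 //; last by lra.
exact: expR_ge1Dx.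
Qed.

Lemma exp_le_inv (R : realType) (t : R) : t < 1 -> expR t <= (1 - t)^-1.
Proof.
move=> ht.
have h1 : 1 - t <= expR (- t) by have := expR_ge1Dx (- t); lra.
have -> : expR t = (expR (- t))^-1 by rewrite expRN invrK.
by rewrite lef_pV2 ?posrE ?expR_gt0 //; lra.
Qed.

Lemma exp_tail (R : realType) (a X : R) : a <= X ->
  expR (- X) <= expR (- a) / (1 + (X - a)).
Proof.
move=> h.
have -> : - X = - a + - (X - a) by ring.
rewrite expRD ler_wpM2l ?expR_ge0 //.
apply: expN_le; lra.
Qed.

Lemma bound_pow (R : realType) (th mu : R) (k : nat) : 0 < mu -> mu <= 1 ->
  (1 + (expR th - 1) * mu) ^+ k <= expR (k%:R * ((expR th - 1) * mu)).
Proof.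
move=> h0 h1; rewrite expRM_natl; apply: lerXn2r.
- have := expR_gt0 th; rewrite nnegrE; nra.
- by rewrite nnegrE expR_ge0.
- exact: expR_ge1Dx.
Qed.

Lemma upper_tail (R : realType) (U : finType) (n m' k' : nat) (q : U -> R)
  (h : U -> 'I_n) (e : R) :
  (k'.+1 + k'.+1 <= m'.+1)%N -> is_prob q -> (0 < n)%N -> 0 < e ->
  Ex q (fun x : {ffun 'I_m'.+1 -> U} => expR (2 * e / (5 + 2 * e) * k'.+1%:R *
        (Ustat R h x - pnorm2 q h * (1 + e)))) <=
  expR (- (k'.+1%:R * pnorm2 q h * e ^+ 2 * 6 / (5 * (5 + 2 * e)))).
Proof.
move=> hk hq hn he; have [hq0 hq1] := hq.
have /andP [hmu0 hmu1] := pnorm2_bounds h hq hn.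
set mu := pnorm2 q h in hmu0 hmu1 *.
have hmu : 0 < mu by apply: lt_le_trans hmu0; rewrite invr_gt0 ltr0n.
set th := 2 * e / (5 + 2 * e); set k := k'.+1%:R.
have hk0 : (0 : R) < k by rewrite ltr0n.
have hD : 0 < 5 + 2 * e by lra.
have hth1 : th < 1.
  by rewrite /th ltr_pdivrMr //; lra.
have -> : (fun x : {ffun 'I_m'.+1 -> U} => expR (th * k * (Ustat R h x - mu * (1 + e)))) =
   (fun x => expR (- (th * k * mu * (1 + e))) * expR (th * k * Ustat R h x)).
  by apply: funext => x; rewrite -expRD; congr expR; ring.
rewrite Ex_scale.
apply: le_trans (ler_wpM2l (expR_ge0 _) (@mgf_U R U n m' k' q h th hk hq1 hq0)) _.
apply: le_trans (ler_wpM2l (expR_ge0 _) (@bound_pow R th mu k'.+1 hmu hmu1)) _.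
rewrite -expRD ler_expR -/k.
have hE := exp_le_inv hth1.
have e1 : (1 - th)^-1 = (5 + 2 * e) / 5.
  by rewrite /th; field; lra.
rewrite e1 in hE.
have e2 : 2 * e / 5 - th * (1 + e) = - (e ^+ 2 * 6 / (5 * (5 + 2 * e))).
  by rewrite /th; field; lra.
have e3 : expR th - 1 - th * (1 + e) <= - (e ^+ 2 * 6 / (5 * (5 + 2 * e))).
  by rewrite -e2; lra.
have hkm : 0 <= k * mu by apply: mulr_ge0; lra.
have := ler_wpM2l hkm e3.
set A := expR th; set B := e ^+ 2 * 6 / (5 * (5 + 2 * e)).
have -> : - (k * mu * e ^+ 2 * 6 / (5 * (5 + 2 * e))) = - (k * mu * B) by rewrite /B; ring.
move=> H; nra.
Qed.

Lemma lower_tail (R : realType) (U : finType) (n m' k' : nat) (q : U -> R)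
  (h : U -> 'I_n) (e : R) :
  (k'.+1 + k'.+1 <= m'.+1)%N -> is_prob q -> (0 < n)%N -> 0 < e ->
  Ex q (fun x : {ffun 'I_m'.+1 -> U} => expR (e / 2 * k'.+1%:R *
        (pnorm2 q h * (1 - e) - Ustat R h x))) <=
  expR (- (k'.+1%:R * pnorm2 q h * e ^+ 2 / 4)).
Proof.
move=> hk hq hn he; have [hq0 hq1] := hq.
have /andP [hmu0 hmu1] := pnorm2_bounds h hq hn.
set mu := pnorm2 q h in hmu0 hmu1 *.
have hmu : 0 < mu by apply: lt_le_trans hmu0; rewrite invr_gt0 ltr0n.
set th := e / 2; set k := k'.+1%:R.
have hk0 : (0 : R) < k by rewrite ltr0n.
have -> : (fun x : {ffun 'I_m'.+1 -> U} => expR (th * k * (mu * (1 - e) - Ustat R h x))) =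
   (fun x => expR (th * k * mu * (1 - e)) * expR ((- th) * k * Ustat R h x)).
  by apply: funext => x; rewrite -expRD; congr expR; ring.
rewrite Ex_scale.
apply: le_trans (ler_wpM2l (expR_ge0 _) (@mgf_U R U n m' k' q h (- th) hk hq1 hq0)) _.
apply: le_trans (ler_wpM2l (expR_ge0 _) (@bound_pow R (- th) mu k'.+1 hmu hmu1)) _.
rewrite -expRD ler_expR -/k.
have hth : 0 <= th by rewrite /th; lra.
have hE := expN_le hth.
have e2 : th * (1 - e) + ((1 + th)^-1 - 1) = - (e ^+ 2 * (1 + e) / (2 * (2 + e))).
  by rewrite /th; field; lra.
have e4 : - (e ^+ 2 * (1 + e) / (2 * (2 + e))) <= - (e ^+ 2 / 4).
  rewrite lerN2 ler_pdivrMr; last by lra.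
  rewrite mulrAC ler_pdivlMr; last by lra.
  have : 0 < e ^+ 2 by rewrite exprn_gt0.
  nra.
have e3 : th * (1 - e) + (expR (- th) - 1) <= - (e ^+ 2 / 4) by lra.
have hkm : 0 <= k * mu by apply: mulr_ge0; lra.
have := ler_wpM2l hkm e3.
set A := expR (- th); set B := e ^+ 2 / 4.
have -> : - (k * mu * e ^+ 2 / 4) = - (k * mu * B) by rewrite /B; ring.
move=> H; nra.
Qed.

Lemma inv_le (R : realType) (y c : R) : 0 < c -> 1 <= c * (1 + y) -> (1 + y)^-1 <= c.
Proof.
move=> hc h.
have hy : 0 < 1 + y by nra.
by rewrite -[(1 + y)^-1]mul1r ler_pdivrMr // mulrC.
Qed.

Lemma final_num (R : realType) (a X1 X2 c : R) :
  1 <= a -> a <= X1 -> a <= X2 ->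
  (1 + (X1 - a))^-1 + (1 + (X2 - a))^-1 <= c ->
  expR (- X1) + expR (- X2) <= c * expR (- a).
Proof.
move=> ha h1 h2 hc.
apply: le_trans (lerD (exp_tail h1) (exp_tail h2)) _.
rewrite -mulrDr mulrC ler_wpM2r ?expR_ge0 //.
Qed.

Unset Implicit Arguments. Set Strict Implicit. Set Printing Implicit Defensive.

Theorem corollary3 (R : realType) (U : finType) (q : U -> R) (n : nat)
  (h : U -> 'I_n) (beta lambda : R) (m : nat) :
  is_prob q ->
  (24 < n)%N ->
  ln 3 / ln n%:R < beta ->
  1 / 2 < lambda ->
  m%:R = n%:R `^ (1 / 2 + beta + lambda) ->
  probm q (fun x : {ffun 'I_m -> U} =>
    `| (\sum_(i < n) ((kcount h x i)%:R * ((kcount h x i)%:R - 1))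
          / (m%:R * (m%:R - 1))) * (pnorm2 q h)^-1 - 1 |
      <= 22 / 5 * n%:R `^ (- (beta / 2)))
  >= 1 - 10 / 9 * expR (- (n%:R `^ (lambda - 1 / 2))).
Proof.
move=> hq hn hb hl hm.
have [hq0 hq1] := hq.
have hn0 : (0 < n)%N by apply: leq_ltn_trans hn.
set Nr : R := n%:R.
have hN : 24 < Nr by rewrite /Nr ltr_nat.
set L := ln Nr.
have hL : 0 < L by apply: ln_gt0; lra.
have powE : forall x, Nr `^ x = expR (x * L).
  by move=> x; rewrite /powR ifF //; apply/negbTE; rewrite gt_eqF //; lra.
have eN : expR L = Nr by rewrite /L lnK // posrE; lra.
set a := expR ((lambda - 1 / 2) * L).
have ha : 1 < a by rewrite /a expR_gt1; apply: mulr_gt0 => //; lra.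
set b := expR (beta * L).
have hb3 : 3 < b.
  have h3 : expR (ln 3) = 3 :> R by rewrite lnK // posrE.
  rewrite -h3 /b ltr_expR -ltr_pdivrMr //.
set e := 22 / 5 * expR (- (beta / 2) * L).
have he : 0 < e by rewrite /e mulr_gt0 ?expR_gt0.
have he2b : e ^+ 2 * b = 484 / 25.
  rewrite /e /b exprMn expr2 -!mulrA -!expRD.
  have -> : - (beta / 2) * L + (- (beta / 2) * L + beta * L) = 0 by field.
  by rewrite expR0 mulr1; field.
have hmab : m%:R = Nr * a * b.
  by rewrite hm powE /a /b -eN -!expRD; congr expR; field.
rewrite !powE -/a -/e.
have hm2 : (1 < m)%N.
  rewrite -(ltr_nat R) hmab; have : 0 < a * b by nra.
  nra.
have hdh := odd_double_half m.
have hob : (odd m <= 1)%N by case: (odd m).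
set k := m./2 in hdh.
have hkp : (0 < k)%N by rewrite -double_gt0; lia.
have [m' hm'] : exists m', m = m'.+1 by exists m.-1; lia.
have [k' hk'] : exists k', k = k'.+1 by exists k.-1; lia.
have hk : (k'.+1 + k'.+1 <= m'.+1)%N by rewrite -hk' -hm' addnn; lia.
have hk2 : (m'.+1 <= k'.+1 + k'.+1 + 1)%N by rewrite -hk' -hm' addnn; lia.
have hkr : m%:R - 1 <= 2 * k'.+1%:R :> R.
  have : (m%:R : R) <= (k'.+1 + k'.+1 + 1)%N%:R by rewrite ler_nat hm'.
  rewrite !natrD; lra.
clearbody k; subst m.
have Ev : forall x : {ffun 'I_m'.+1 -> U},
   (\sum_(i < n) (kcount h x i)%:R * ((kcount h x i)%:R - 1) /
      (m'.+1%:R * (m'.+1%:R - 1))) = Ustat R h x.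
  by move=> x; rewrite -mulr_suml /kcount collision.
under [X in probm q X]funext => x do rewrite Ev.
rewrite probm_compl //.
have /andP [hmu0 hmu1] := pnorm2_bounds h hq hn0.
rewrite -/Nr in hmu0.
set mu := pnorm2 q h in hmu0 hmu1 *.
have hmu : 0 < mu by apply: lt_le_trans hmu0; rewrite invr_gt0; lra.
have hmuN : 1 <= mu * Nr.
  by rewrite -(mulVf (x := Nr)) ?gt_eqF ?ler_wpM2r //; lra.
have hU0 : forall x : {ffun 'I_m'.+1 -> U}, 0 <= Ustat R h x.
  move=> x; rewrite /Ustat; apply: divr_ge0.
    by apply: sumr_ge0 => i _; apply: sumr_ge0 => j _; rewrite /Kh ler0n.
  apply: mulr_ge0; first by rewrite ler0n.
  by rewrite subr_ge0 ler1n.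
set kr : R := k'.+1%:R in hkr *.
have hkr0 : 0 < kr by rewrite /kr ltr0n.
have he2 : e ^+ 2 < 484 / 75.
  have : 0 < e ^+ 2 by rewrite exprn_gt0.
  nra.
set Z := kr * mu * e ^+ 2.
have hZ : 242 / 25 * a - 27 / 200 <= Z.
  have h1 : 2 * kr * e ^+ 2 >= (Nr * a * b - 1) * e ^+ 2.
    by rewrite ler_wpM2r ?sqr_ge0 //; lra.
  have h2 : 2 * Z * Nr >= 2 * kr * e ^+ 2.
    have -> : 2 * Z * Nr = 2 * (kr * e ^+ 2) * (mu * Nr) by rewrite /Z; ring.
    have -> : 2 * kr * e ^+ 2 = 2 * (kr * e ^+ 2) * 1 by ring.
    rewrite ler_wpM2l //; apply: mulr_ge0; first by lra.
    by apply: mulr_ge0; [lra | apply: sqr_ge0].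
  have h3 : (Nr * a * b - 1) * e ^+ 2 = Nr * a * (484 / 25) - e ^+ 2.
    by rewrite -he2b; ring.
  set w := 2 * Z - 484 / 25 * a.
  have h4 : w * Nr >= - (484 / 75).
    have -> : w * Nr = 2 * Z * Nr - Nr * a * (484 / 25) by rewrite /w; ring.
    lra.
  have h5 : w >= - (484 / 1800) by nra.
  rewrite /w in h5; lra.
suff H : probm q (fun x : {ffun 'I_m'.+1 -> U} => ~~ (`|Ustat R h x / mu - 1| <= e))
   <= 10 / 9 * expR (- a) by lra.
have bad : forall x : {ffun 'I_m'.+1 -> U}, ~~ (`|Ustat R h x / mu - 1| <= e) ->
    (mu * (1 + e) < Ustat R h x) \/ (Ustat R h x < mu * (1 - e)).
  move=> x; have Ut : Ustat R h x = Ustat R h x / mu * mu by rewrite divfK // gt_eqF.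
  set t := Ustat R h x / mu in Ut *.
  rewrite Ut -ltNge ltr_normr => /orP [H|H]; [left|right]; nra.
have one_le : forall y : R, 0 <= y -> 1 <= expR y.
  by move=> y hy; have := expR_ge1Dx y; lra.
have UT := upper_tail h hk hq hn0 he.
have LT := lower_tail h hk hq hn0 he.
rewrite -/kr -/mu -/Z in UT LT.
set X1 := Z * 6 / (5 * (5 + 2 * e)) in UT.
set X2 := Z / 4 in LT.
have hD : 0 < 5 * (5 + 2 * e) by lra.
have hXD : X1 * (5 * (5 + 2 * e)) = Z * 6 by rewrite /X1; field; lra.
have hX10 : 0 <= X1 by rewrite /X1 divr_ge0 //; nra.
have hth : 0 <= 2 * e / (5 + 2 * e) * kr by apply: mulr_ge0; [apply: divr_ge0|]; lra.
have hth2 : 0 <= e / 2 * kr by apply: mulr_ge0; lra.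
have [he1|he1] := ltP e 1.
  apply: le_trans (markov (Y := fun x => expR (2 * e / (5 + 2 * e) * kr *
        (Ustat R h x - mu * (1 + e))) + expR (e / 2 * kr *
        (mu * (1 - e) - Ustat R h x))) hq0 _ _) _.
  - by move=> x; apply: addr_ge0; apply: expR_ge0.
  - move=> x /bad [H|H].
      have := one_le (2 * e / (5 + 2 * e) * kr * (Ustat R h x - mu * (1 + e))).
      have := expR_ge0 (e / 2 * kr * (mu * (1 - e) - Ustat R h x)).
      move=> h1 h2; suff : 1 <= expR (2 * e / (5 + 2 * e) * kr * (Ustat R h x - mu * (1 + e))) by lra.
      by apply: h2; apply: mulr_ge0 => //; lra.
    have := one_le (e / 2 * kr * (mu * (1 - e) - Ustat R h x)).
    have := expR_ge0 (2 * e / (5 + 2 * e) * kr * (Ustat R h x - mu * (1 + e))).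
    move=> h1 h2; suff : 1 <= expR (e / 2 * kr * (mu * (1 - e) - Ustat R h x)) by lra.
    by apply: h2; apply: mulr_ge0 => //; lra.
  rewrite Ex_add; apply: le_trans (lerD UT LT) _.
  have hX1 : Z * 6 <= X1 * 35 by nra.
  apply: final_num; first by lra.
  - lra.
  - rewrite /X2; lra.
  have i1 : (1 + (X1 - a))^-1 <= 5 / 8 by apply: inv_le => //; lra.
  have i2 : (1 + (X2 - a))^-1 <= 9 / 20 by apply: inv_le => //; rewrite /X2; lra.
  lra.
have he3 : e < 51 / 20 by nra.
apply: le_trans (markov (Y := fun x => expR (2 * e / (5 + 2 * e) * kr *
      (Ustat R h x - mu * (1 + e)))) hq0 _ _) _.
- by move=> x; apply: expR_ge0.
- move=> x /bad [H|H].
    by apply: one_le; apply: mulr_ge0 => //; lra.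
  have := hU0 x; nra.
apply: (le_trans UT).
have hX1 : Z * 6 <= X1 * (101 / 2) by nra.
apply: le_trans (exp_tail (a := a) _) _; first by lra.
rewrite mulrC ler_wpM2r ?expR_ge0 //.
have i1 : (1 + (X1 - a))^-1 <= 9 / 10 by apply: inv_le => //; lra.
lra.
Qed.
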